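(* Let $S$ be a stable semigroup. If $S$ is DSC, then $S$ is a group.
   Context: Green's relations on $S$: $s\,\mathcal{R}\,t\iff sS^1=tS^1$, $s\,\mathcal{L}\,t\iff S^1s=S^1t$, $s\,\mathcal{J}\,t\iff S^1sS^1=S^1tS^1$, where $S^1$ is $S$ with an identity adjoined. $S$ is stable if for all $s,x\in S$: $x\,\mathcal{J}\,sx\Rightarrow x\,\mathcal{L}\,sx$ and $x\,\mathcal{J}\,xs\Rightarrow x\,\mathcal{R}\,xs$. A diagonal subsemigroup of $S\times S$ is a subsemigroup containing $\{(s,s)\colon s\in S\}$; a congruence is a symmetric and transitive diagonal subsemigroup; $S$ is DSC if every diagonal subsemigroup of $S\times S$ is a congruence on $S$. *)

(* Defs.v *)
From Stdlib Require Import Classical.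

Set Implicit Arguments.

Section Semigroup.
Variable S : Type.
Variable mul : S -> S -> S.

(* S^1 : S with an identity adjoined (None is the adjoined identity). *)
Definition mul1l (a : option S) (s : S) : S :=
  match a with None => s | Some a => mul a s end.
Definition mul1r (s : S) (a : option S) : S :=
  match a with None => s | Some a => mul s a end.

Definition in_right_ideal (s t : S) : Prop := exists a : option S, t = mul1r s a.
Definition in_left_ideal (s t : S) : Prop := exists a : option S, t = mul1l a s.
Definition in_two_ideal (s t : S) : Prop :=
  exists a b : option S, t = mul1r (mul1l a s) b.

Definition greenR (s t : S) : Prop := forall u, in_right_ideal s u <-> in_right_ideal t u.
Definition greenL (s t : S) : Prop := forall u, in_left_ideal s u <-> in_left_ideal t u.
Definition greenJ (s t : S) : Prop := forall u, in_two_ideal s u <-> in_two_ideal t u.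

Definition stable : Prop :=
  forall s x : S,
    (greenJ x (mul s x) -> greenL x (mul s x)) /\
    (greenJ x (mul x s) -> greenR x (mul x s)).

Definition diagonal_subsemigroup (D : S -> S -> Prop) : Prop :=
  (forall s, D s s) /\
  (forall a b c d, D a b -> D c d -> D (mul a c) (mul b d)).

Definition is_congruence (D : S -> S -> Prop) : Prop :=
  diagonal_subsemigroup D /\
  (forall a b, D a b -> D b a) /\
  (forall a b c, D a b -> D b c -> D a c).

Definition DSC : Prop :=
  forall D : S -> S -> Prop, diagonal_subsemigroup D -> is_congruence D.

Definition is_group : Prop :=
  exists e : S,
    (forall x, mul e x = x /\ mul x e = x) /\
    (forall x, exists y, mul x y = e /\ mul y x = e).

End Semigroup.

(* Main.v *)
Require Import Defs.
From Stdlib Require Import Classical.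

Section Aux.
Variable S : Type.
Variable mul : S -> S -> S.
Hypothesis mul_assoc : forall x y z : S, mul x (mul y z) = mul (mul x y) z.

Lemma r_trans a b c : in_right_ideal mul a b -> in_right_ideal mul b c -> in_right_ideal mul a c.
Proof.
  intros [o1 H1] [o2 H2]; subst.
  destruct o1 as [u|], o2 as [v|]; simpl.
  - exists (Some (mul u v)); simpl; now rewrite mul_assoc.
  - exists (Some u); reflexivity.
  - exists (Some v); reflexivity.
  - exists None; reflexivity.
Qed.

Lemma l_trans a b c : in_left_ideal mul a b -> in_left_ideal mul b c -> in_left_ideal mul a c.
Proof.
  intros [o1 H1] [o2 H2]; subst.
  destruct o1 as [u|], o2 as [v|]; simpl.
  - exists (Some (mul v u)); simpl; now rewrite mul_assoc.
  - exists (Some u); reflexivity.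
  - exists (Some v); reflexivity.
  - exists None; reflexivity.
Qed.

Lemma two_mulr a z c : in_two_ideal mul a z -> in_two_ideal mul a (mul z c).
Proof.
  intros [p [q H]]; subst.
  destruct q as [v|]; simpl.
  - exists p, (Some (mul v c)); simpl; now rewrite mul_assoc.
  - exists p, (Some c); reflexivity.
Qed.

Lemma two_mull a z c : in_two_ideal mul a z -> in_two_ideal mul a (mul c z).
Proof.
  intros [p [q H]]; subst.
  destruct p as [u|], q as [v|]; simpl.
  - exists (Some (mul c u)), (Some v); simpl; now rewrite !mul_assoc.
  - exists (Some (mul c u)); exists None; simpl; now rewrite !mul_assoc.
  - exists (Some c), (Some v); simpl; now rewrite mul_assoc.
  - exists (Some c), None; reflexivity.
Qed.

Lemma simple_of_DSC : DSC mul -> forall a y, in_two_ideal mul a y.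
Proof.
  intros Hd a y.
  set (D := fun x z => x = z \/ in_two_ideal mul a x).
  assert (HD : diagonal_subsemigroup mul D).
  { split.
    - intros s; left; reflexivity.
    - intros x y' c d [H1|H1] [H2|H2]; subst.
      + left; reflexivity.
      + right; apply two_mull; assumption.
      + right; apply two_mulr; assumption.
      + right; apply two_mulr; assumption. }
  destruct (Hd D HD) as [_ [Hs _]].
  assert (Ha : D a y) by (right; exists None, None; reflexivity).
  destruct (Hs _ _ Ha) as [E|E].
  - subst; exists None, None; reflexivity.
  - exact E.
Qed.

Lemma allJ : DSC mul -> forall x z, greenJ mul x z.
Proof. intros Hd x z u; split; intros _; apply simple_of_DSC; auto. Qed.

Lemma right_all : stable mul -> DSC mul -> forall a b, in_right_ideal mul a b.
Proof.
  intros Hst Hd a b.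
  assert (HR : forall x c, greenR mul x (mul x c)).
  { intros x c; apply (proj2 (Hst c x)); apply allJ; auto. }
  set (D := fun x y => in_right_ideal mul a y -> in_right_ideal mul a x).
  assert (HD : diagonal_subsemigroup mul D).
  { split.
    - intros s H; exact H.
    - intros x y c d H1 _ H.
      assert (Hy : in_right_ideal mul a y).
      { apply r_trans with (mul y d); auto.
        apply (proj1 (HR y d y)). exists None; reflexivity. }
      apply r_trans with x; auto. exists (Some c); reflexivity. }
  destruct (Hd D HD) as [_ [Hs _]].
  apply (Hs a b); [intros _; exists None; reflexivity | exists None; reflexivity].
Qed.

Lemma left_all : stable mul -> DSC mul -> forall a b, in_left_ideal mul a b.
Proof.
  intros Hst Hd a b.
  assert (HL : forall x c, greenL mul x (mul c x)).
  { intros x c; apply (proj1 (Hst c x)); apply allJ; auto. }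
  set (D := fun x y => in_left_ideal mul a y -> in_left_ideal mul a x).
  assert (HD : diagonal_subsemigroup mul D).
  { split.
    - intros s H; exact H.
    - intros x y c d _ H2 H.
      assert (Hy : in_left_ideal mul a d).
      { apply l_trans with (mul y d); auto.
        apply (proj1 (HL d y d)). exists None; reflexivity. }
      apply l_trans with c; auto. exists (Some x); reflexivity. }
  destruct (Hd D HD) as [_ [Hs _]].
  apply (Hs a b); [intros _; exists None; reflexivity | exists None; reflexivity].
Qed.

Lemma right_strict : stable mul -> DSC mul -> forall a b, exists u, b = mul a u.
Proof.
  intros Hst Hd a b.
  destruct (right_all Hst Hd a b) as [[u|] H]; simpl in H.
  - exists u; exact H.
  - subst b. destruct (right_all Hst Hd (mul a a) a) as [[v|] H]; simpl in H.
    + exists (mul a v). now rewrite mul_assoc.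
    + exists a; exact H.
Qed.

Lemma left_strict : stable mul -> DSC mul -> forall a b, exists u, b = mul u a.
Proof.
  intros Hst Hd a b.
  destruct (left_all Hst Hd a b) as [[u|] H]; simpl in H.
  - exists u; exact H.
  - subst b. destruct (left_all Hst Hd (mul a a) a) as [[v|] H]; simpl in H.
    + exists (mul v a). now rewrite <- mul_assoc.
    + exists a; exact H.
Qed.
End Aux.

Theorem mainTheorem5 (S : Type) (mul : S -> S -> S)
  (mul_assoc : forall x y z : S, mul x (mul y z) = mul (mul x y) z)
  (S_nonempty : inhabited S) :
  stable mul -> DSC mul -> is_group mul.
Proof.
  intros Hst Hd.
  destruct S_nonempty as [a0].
  pose proof (@right_strict S mul mul_assoc Hst Hd) as Rs.
  pose proof (@left_strict S mul mul_assoc Hst Hd) as Ls.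
  destruct (Rs a0 a0) as [e He].
  destruct (Ls a0 a0) as [f Hf].
  assert (Re : forall x, mul x e = x).
  { intros x; destruct (Ls a0 x) as [v Hv]; subst x.
    rewrite <- mul_assoc, <- He; reflexivity. }
  assert (Lf : forall x, mul f x = x).
  { intros x; destruct (Rs a0 x) as [v Hv]; subst x.
    rewrite mul_assoc, <- Hf; reflexivity. }
  assert (Eef : e = f) by (rewrite <- (Lf e) at 1; apply Re).
  subst f.
  exists e; split.
  - intros x; split; auto.
  - intros x. destruct (Rs x e) as [y Hy]. destruct (Ls x e) as [z Hz].
    exists y; split; [symmetry; exact Hy|].
    assert (z = y).
    { rewrite <- (Re z), Hy, mul_assoc, <- Hz, Lf; reflexivity. }
    subst z; symmetry; exact Hz.
Qed.
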